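(* Let $f$ be the staircase function with descriptor $(h,o,\delta,\ell,L,V)$. For every integer $i\in[h]$, the fitness signal of step $i$ of $f$ is $S(\text{step } i)=\delta/2^{o(i-1)}$.
   Context: For a positive integer $n$, $[n]=\{1,\dots,n\}$ and $\mathfrak B_\ell$ is the set of binary strings of length $\ell$; $g_j$ denotes the $j$-th bit of $g$. For a $k$-tuple $x=(x_1,\dots,x_k)$ of integers in $[\ell]$ and $g\in\mathfrak B_\ell$, $\Xi_x(g)$ is the string $g_{x_1}g_{x_2}\cdots g_{x_k}$. For a matrix $M$, $M_{i:}$ is its $i$-th row (as a tuple). A staircase function descriptor is a tuple $(h,o,\delta,\ell,L,V)$ where $h,o,\ell$ are positive integers with $ho\le \ell$, $\delta>0$ is real, $V$ is an $h\times o$ matrix of bits, and $L$ is an $h\times o$ matrix whose $ho$ entries are pairwise distinct integers in $[\ell]$. The staircase function $f$ with this descriptor is the stochastic function on $\mathfrak B_\ell$ computed as follows on input $g$: draw $x\sim\mathcal N(0,1)$ (independently at each evaluation); for $i=1,\dots,h$ in order: if $\Xi_{L_{i:}}(g)=V_{i1}\cdots V_{io}$ then set $x\leftarrow x+\delta$, otherwise set $x\leftarrow x-\delta/(2^o-1)$ and stop the loop; return $x$. Step $i$ of $f$ is the schema $\{g\in\mathfrak B_\ell:\Xi_{L_{i:}}(g)=V_{i1}\cdots V_{io}\}$; stage $i$ of $f$ is the schema of all $g$ lying in steps $1,\dots,i$ simultaneously. For a schema $\gamma\subseteq\mathfrak B_\ell$, $F_\gamma$ is the random variable giving the value of $f$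 at a string drawn uniformly from $\gamma$. The fitness signal of $\gamma$ is $S(\gamma)=\mathbf E[F_\gamma]-\mathbf E[F_{\mathfrak B_\ell}]$. *)

(* Defs.v *)
From HB Require Import structures.
From mathcomp Require Import all_boot all_order all_algebra.
Set Implicit Arguments. Unset Strict Implicit. Unset Printing Implicit Defensive.
Import Order.TTheory GRing.Theory Num.Theory.
Local Open Scope ring_scope.

(* Binary strings of length l: g : bits l, bit j is g j, positions are 'I_l
   (0-based; position j here is position j+1 in the paper). *)
Definition bits (l : nat) := {ffun 'I_l -> bool}.

Definition Xi (l : nat) (x : seq 'I_l) (g : bits l) : seq bool := [seq g p | p <- x].

Definition mrow (T : Type) (h o : nat) (M : 'M[T]_(h, o)) (i : 'I_h) : seq T :=
  [seq M i j | j <- enum 'I_o].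

Section Staircase.
Variables (R : realFieldType) (h o l : nat) (delta : R)
          (L : 'M['I_l]_(h, o)) (V : 'M[bool]_(h, o)).

Definition in_step (i : 'I_h) (g : bits l) : bool := Xi (mrow L i) g == mrow V i.

Fixpoint loop_incr (g : bits l) (s : seq 'I_h) : R :=
  match s with
  | [::] => 0
  | i :: s' => if in_step i g then delta + loop_incr g s'
               else - (delta / (2%:R ^+ o - 1))
  end.

(* Expected value of f(g): f(g) = x + loop_incr g (enum 'I_h) with x ~ N(0,1),
   so E[f(g)] = E[x] + loop_incr = loop_incr (E[N(0,1)] = 0). *)
Definition Ef (g : bits l) : R := loop_incr g (enum 'I_h).

Definition EF (gamma : {set bits l}) : R :=
  (\sum_(g in gamma) Ef g) / (#|gamma|%:R).

Definition signal (gamma : {set bits l}) : R := EF gamma - EF [set: bits l].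

Definition step_set (i : 'I_h) : {set bits l} := [set g | in_step i g].

End Staircase.

(* Main.v *)
Require Import Defs.
From HB Require Import structures.
From mathcomp Require Import all_boot all_order all_algebra.
From mathcomp Require Import zify.
From mathcomp Require Import ring lra.
Import Order.TTheory GRing.Theory Num.Theory.
Module MA.
Set Implicit Arguments. Unset Strict Implicit. Unset Printing Implicit Defensive.

Section Count.
Variables (h o l : nat) (L : 'M['I_l]_(h, o)) (V : 'M[bool]_(h, o)).
Hypothesis injL : injective (fun p : 'I_h * 'I_o => L p.1 p.2).
Hypothesis hol : (h * o <= l)%N.

Definition sat (T : {set 'I_h}) (g : bits l) := [forall k in T, in_step L V k g].

Lemma in_stepP j (g : bits l) : reflect (forall k, g (L j k) = V j k) (in_step L V j g).
Proof.
rewrite /in_step /Xi /mrow -map_comp.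
apply: (iffP eqP) => [/eq_in_map H k | H]; first by apply: H; rewrite mem_enum.
by apply/eq_in_map => k _; apply: H.
Qed.

Lemma card_sat T : (#|[set g : bits l | sat T g]| * 2 ^ (o * #|T|) = 2 ^ l)%N.
Proof.
pose P := (fun x : 'I_h * 'I_o => L x.1 x.2) @: setX T setT.
pose F (p : 'I_l) := [pred b : bool | [forall j in T, forall k, (L j k == p) ==> (b == V j k)]].
have cP : #|P| = (#|T| * o)%N by rewrite card_imset // cardsX cardsT card_ord.
have e1 : #|[set g : bits l | sat T g]| = #|(family F : simpl_pred {ffun 'I_l -> bool})|.
  apply: eq_card => g; rewrite inE; apply/forall_inP/familyP => [H p | H j jT].
    apply/forall_inP => j jT; apply/forallP => k; apply/implyP => /eqP <-.
    by apply/eqP; move/in_stepP: (H j jT); apply.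
  apply/in_stepP => k; have /forall_inP /(_ j jT) /forallP /(_ k) := H (L j k).
  by rewrite eqxx /= => /eqP.
have cF p : #|F p| = if p \in P then 1%N else 2%N.
  case: ifP => pP.
    case/imsetP: pP => [[j0 k0]] /=; rewrite !inE /= => /andP [j0T _] ->.
    rewrite -(card1 (V j0 k0)); apply: eq_card => b; rewrite !inE.
    apply/forall_inP/eqP => [H | ->].
      by have /forallP /(_ k0) := H j0 j0T; rewrite eqxx => /eqP.
    move=> j jT; apply/forallP => k; apply/implyP => /eqP E.
    by have [-> ->] : (j, k) = (j0, k0) by apply: injL.
  rewrite -card_bool; apply: eq_card => b; rewrite !inE.
  apply/forall_inP => j jT; apply/forallP => k; apply/implyP => /eqP E.
  by move: pP; rewrite -E; rewrite (imset_f (fun x : 'I_h * 'I_o => L x.1 x.2) (_ : (j, k) \in setX T setT)) // inE jT inE.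
rewrite e1 card_family.
have -> : foldr muln 1 [seq #|F x| | x : 'I_l] = \prod_(x : 'I_l) #|F x|.
  rewrite /image_mem -big_enum; elim: (enum _) => [|x s IH]; first by rewrite big_nil.
  by rewrite big_cons /= IH.
under eq_bigr do rewrite cF.
have -> : \prod_(x : 'I_l) (if x \in P then 1%N else 2%N) = \prod_(x | x \notin P) 2%N.
  by rewrite [RHS]big_mkcond; apply: eq_bigr => x _; case: (x \in P).
rewrite prod_nat_const.
have cC := cardsC P; rewrite card_ord in cC.
have -> : #|[pred i | i \notin P]| = #|~: P| by apply: eq_card => x; rewrite !inE.
have Th : (#|T| <= h)%N by have := max_card (mem T); rewrite card_ord.
rewrite -expnD; congr (_ ^ _); rewrite cP in cC.
have : (#|T| * o <= h * o)%N by rewrite leq_mul2r Th orbT.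
lia.
Qed.
End Count.

End MA.
Import MA.

Module MB.
Set Implicit Arguments. Unset Strict Implicit. Unset Printing Implicit Defensive.
Local Open Scope ring_scope.

Section Main.
Variables (R : realFieldType) (h o l : nat) (delta : R)
  (L : 'M['I_l]_(h, o)) (V : 'M[bool]_(h, o)).
Let c : R := delta / (2%:R ^+ o - 1).

Lemma loop_sum (g : bits l) (s : seq 'I_h) i0 :
  loop_incr delta L V g s = \sum_(t < size s)
    (if all (fun k => in_step L V k g) (take t s)
     then (if in_step L V (nth i0 s t) g then delta else - c) else 0).
Proof.
elim: s => [|i s IH] /=; first by rewrite big_ord0.
rewrite big_ord_recl /=.
case: ifP => Hi.
  by rewrite IH; congr (_ + _); apply: eq_bigr => t _.
by rewrite big1 ?addr0 // => t _.
Qed.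

Definition Tset (j : nat) : {set 'I_h} := [set k : 'I_h | (k < j)%N].

Lemma mem_take_enum (t : nat) (k : 'I_h) : (k \in take t (enum 'I_h)) = (k < t)%N.
Proof.
rewrite -(mem_map val_inj) map_take val_enum_ord take_iota mem_iota add0n leq0n /=.
by rewrite leq_min ltn_ord andbT.
Qed.

Lemma sat_U (A B : {set 'I_h}) g : sat L V (A :|: B) g = sat L V A g && sat L V B g.
Proof.
apply/forall_inP/andP => [H | [/forall_inP HA /forall_inP HB] k].
  by split; apply/forall_inP => k kin; apply: H; rewrite inE kin ?orbT.
by rewrite inE => /orP [/HA|/HB].
Qed.

Lemma sat1 j g : sat L V [set j] g = in_step L V j g.
Proof.
apply/forall_inP/idP => [H | H k]; first by apply: H; rewrite inE.
by rewrite inE => /eqP ->.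
Qed.

Definition term (j : 'I_h) (g : bits l) : R :=
  delta * (sat L V (j |: Tset j) g)%:R
  - c * ((sat L V (Tset j) g)%:R - (sat L V (j |: Tset j) g)%:R).

Lemma Ef_sum (hp : (0 < h)%N) g : Ef delta L V g = \sum_(j < h) term j g.
Proof.
rewrite /Ef (loop_sum _ _ (Ordinal hp)) size_enum_ord; apply: eq_bigr => j _.
rewrite /term sat_U sat1.
have -> : all (fun k => in_step L V k g) (take j (enum 'I_h)) = sat L V (Tset j) g.
  apply/allP/forall_inP => [H k | H k].
    by rewrite inE -mem_take_enum; apply: H.
  by rewrite mem_take_enum => kj; apply: H; rewrite inE.
have -> : nth (Ordinal hp) (enum 'I_h) j = j by apply: val_inj; rewrite /= nth_enum_ord.
by case: (sat _ _ _ _); case: (in_step _ _ _ _) => /=; ring.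
Qed.
End Main.

End MB.
Import MB.

Module MC.
Set Implicit Arguments. Unset Strict Implicit. Unset Printing Implicit Defensive.
Local Open Scope ring_scope.

Section Main2.
Variables (R : realFieldType) (h o l : nat) (delta : R)
  (L : 'M['I_l]_(h, o)) (V : 'M[bool]_(h, o)).
Hypothesis injL : injective (fun p : 'I_h * 'I_o => L p.1 p.2).
Hypothesis hol : (h * o <= l)%N.
Hypothesis op : (0 < o)%N.

Definition Cnt (T : {set 'I_h}) : R := (#|[set g : bits l | sat L V T g]|)%:R.

Lemma N_gt1 : (1 : R) < 2%:R ^+ o.
Proof.
have : (1 < 2 ^ o)%N by rewrite -{1}(expn0 2) ltn_exp2l.
by rewrite -(ltr_nat R) natrX.
Qed.

Lemma Cnt_eq T : Cnt T = 2%:R ^+ l / (2%:R ^+ o) ^+ #|T|.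
Proof.
have := card_sat V injL hol T => /(congr1 (fun n => n%:R : R)).
rewrite natrM !natrX -exprM => <-.
rewrite mulfK // expf_neq0 //; apply: lt0r_neq0; exact: ltr_pwDl. 
Qed.

Lemma sum_ind U T :
  \sum_(g in [set g | sat L V U g]) ((sat L V T g)%:R : R) = Cnt (U :|: T).
Proof.
rewrite /Cnt -sumr_const big_mkcond [RHS]big_mkcond /=.
by apply: eq_bigr => g _; rewrite !inE sat_U; case: (sat _ _ U g); case: (sat _ _ T g).
Qed.

Lemma sum_term U j :
  \sum_(g in [set g | sat L V U g]) term delta L V j g =
  delta * Cnt (j |: (U :|: Tset h j)) - delta / (2%:R ^+ o - 1) *
     (Cnt (U :|: Tset h j) - Cnt (j |: (U :|: Tset h j))).
Proof.
rewrite /term sumrB -!mulr_sumr sumrB !sum_ind.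
by rewrite setUCA.
Qed.

Lemma val_out (X : {set 'I_h}) j : j \notin X ->
  delta * Cnt (j |: X) - delta / (2%:R ^+ o - 1) * (Cnt X - Cnt (j |: X)) = 0.
Proof.
move=> jX; rewrite !Cnt_eq cardsU1 jX add1n exprS.
have N1 := N_gt1.
have N0 : (2%:R ^+ o : R) != 0 by apply: lt0r_neq0; lra.
have N10 : (2%:R ^+ o - 1 : R) != 0 by apply: lt0r_neq0; lra.
have Nk : ((2%:R ^+ o) ^+ #|X| : R) != 0 by rewrite expf_neq0.
by field; rewrite N0 N10 Nk.
Qed.

Lemma card_Tset i : (i <= h)%N -> #|Tset h i| = i.
Proof.
move=> ih; have winj : injective (widen_ord ih) by move=> x y E; apply: val_inj; exact: (congr1 val E).
transitivity #|widen_ord ih @: [set: 'I_i]|; last by rewrite card_imset // cardsT card_ord.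
apply: eq_card => k; rewrite inE; apply/idP/imsetP => [ki | [k' _ ->]]; last by rewrite /= ltn_ord.
by exists (Ordinal ki) => //; apply: val_inj.
Qed.
End Main2.

End MC.
Import MC.

Local Open Scope ring_scope.

Theorem theorem1 (R : realFieldType) (h o l : nat) (delta : R)
    (L : 'M['I_l]_(h, o)) (V : 'M[bool]_(h, o)) :
  (0 < h)%N -> (0 < o)%N -> (0 < l)%N -> (h * o <= l)%N -> 0 < delta ->
  injective (fun p : 'I_h * 'I_o => L p.1 p.2) ->
  forall i : 'I_h,
    signal delta L V (step_set L V i) = delta / (2%:R ^+ (o * i)).
Proof.
move=> hp op lp hol dp injL i.
have stepE : step_set L V i = [set g | sat L V [set i] g].
  by apply/setP => g; rewrite !inE sat1.
have allE : [set: bits l] = [set g | sat L V set0 g].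
  by apply/setP => g; rewrite !inE; apply/esym/forall_inP => k; rewrite inE.
rewrite /signal /EF stepE allE.
have sumE U : \sum_(g in [set g | sat L V U g]) Ef delta L V g =
    \sum_(j < h) \sum_(g in [set g | sat L V U g]) term delta L V j g.
  by rewrite [RHS]exchange_big /=; apply: eq_bigr => g _; rewrite (Ef_sum _ _ _ hp).
rewrite !sumE.
have -> : \sum_(j < h) \sum_(g in [set g | sat L V set0 g]) term delta L V j g = 0.
  by apply: big1 => j _; rewrite sum_term set0U val_out // inE ltnn.
rewrite (bigD1 i) //=.
rewrite (_ : \sum_(j < h | j != i) _ = 0) ?addr0; last first.
  apply: big1 => j ji.
  by rewrite sum_term val_out // !inE negb_or ltnn ji.
have E : i |: ([set i] :|: Tset h i) = [set i] :|: Tset h i by rewrite setUA setUid.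
rewrite sum_term E subrr mulr0 subr0 mul0r subr0.
have iT : i \notin Tset h i by rewrite inE ltnn.
rewrite !(Cnt_eq R V injL hol) cardsU1 iT card_Tset ?(ltnW (ltn_ord i)) //.
have CE := Cnt_eq R V injL hol [set i]; rewrite /Cnt cards1 in CE; rewrite CE.
have N1 := N_gt1 R op.
have N0 : (2%:R ^+ o : R) != 0 by apply: lt0r_neq0; lra.
have Nk : ((2%:R ^+ o) ^+ i : R) != 0 by rewrite expf_neq0.
have Nl : (2%:R ^+ l : R) != 0 by rewrite expf_neq0 // pnatr_eq0.
rewrite exprM (_ : (true + i)%N = i.+1) // exprS expr1.
by field; rewrite N0 Nk Nl.
Qed.
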